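(* Suppose that $A=\{a_1<a_2<\cdots<a_n\}$ is a set of integers with $a_1=1$ such that $A\oplus A\supseteq[k,k+m-1]$ for some integers $k$ and $m$. If $a_n\le m$, then $\mathcal M(n)\ge m-n$.
   Context: For a set $A$ of integers, $A\oplus A=\{a+b: a,b\in A,\ a\ne b\}$; $[x,y]$ denotes the set of integers $i$ with $x\le i\le y$, and $[m]=\{1,\dots,m\}$. An edge-magic labelling of a graph $G$ with $n$ vertices and $m'$ edges is a bijection $l:V(G)\cup E(G)\to[m'+n]$ such that $l(a)+l(b)+l(ab)$ is the same for all edges $ab$; $G$ is edge-magic if it admits one. $\mathcal M(n)$ denotes the maximum number of edges of an edge-magic graph with $n$ vertices. *)

(* Defs.v *)
From Stdlib Require Import ClassicalEpsilon.
From mathcomp Require Import all_boot all_order all_algebra.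
Set Implicit Arguments. Unset Strict Implicit. Unset Printing Implicit Defensive.
Import Order.TTheory GRing.Theory Num.Theory.

Definition simple_edges (n : nat) (E : {set {set 'I_n}}) : bool :=
  [forall e in E, #|e| == 2].

(* An edge-magic labelling of the graph (I_n, E) given by a vertex labelling
   lv and an edge labelling le (only its values on E matter): the combined map
   V ∪ E -> nat is a bijection onto [1, |E| + n], and l(a)+l(b)+l(ab) is
   constant over the edges ab. *)
Definition edge_magic_labelling (n : nat) (E : {set {set 'I_n}})
    (lv : 'I_n -> nat) (le : {set 'I_n} -> nat) : Prop :=
  let N := #|E| + n in
  [/\ (forall v, 1 <= lv v <= N)%N /\ (forall e, e \in E -> 1 <= le e <= N)%N,
      injective lv /\ {in E &, injective le},
      (forall v e, e \in E -> lv v <> le e),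
      (forall j, 1 <= j <= N -> (exists v, lv v = j) \/ (exists2 e, e \in E & le e = j))%N
    & exists s : nat, forall e, e \in E -> (\sum_(x in e) lv x + le e)%N = s].

Definition edge_magic (n : nat) (E : {set {set 'I_n}}) : Prop :=
  simple_edges E /\ exists lv le, edge_magic_labelling E lv le.

Definition edge_magicb (n : nat) (E : {set {set 'I_n}}) : bool :=
  if excluded_middle_informative (edge_magic E) then true else false.

Definition Mmax (n : nat) : nat :=
  \max_(E : {set {set 'I_n}} | edge_magicb E) #|E|.

Definition in_restricted_sumset (A : seq int) (x : int) : Prop :=
  exists a b, [/\ a \in A, b \in A, a != b & x = a + b]%R.

(* Main.v *)
Require Import Defs.
From mathcomp Require Import all_boot all_order all_algebra zify.
Import Order.TTheory GRing.Theory Num.Theory.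
Local Open Scope ring_scope.

Lemma path_bounds (a : int) (s : seq int) :
  path <%R a s -> forall x, x \in a :: s -> a <= x <= last a s.
Proof.
elim: s a => [|b s IH] a /=.
  by move=> _ x; rewrite inE => /eqP ->; rewrite lexx.
move=> /andP [ab pb] x; rewrite inE => /orP [/eqP ->|xin].
  rewrite lexx /=; have := IH b pb b; rewrite inE eqxx => /(_ isT) /andP [_ h].
  exact: le_trans (ltW ab) h.
have /andP [h1 h2] := IH b pb x xin.
by rewrite h2 andbT (le_trans (ltW ab) h1).
Qed.
Local Close Scope ring_scope.

Lemma construct (n : nat) (A : seq nat) (K M : nat) :
  uniq A -> size A = n -> (forall x, x \in A -> 0 < x <= M) ->
  (forall x, K <= x < K + M -> exists a b, [/\ a \in A, b \in A, a != b & x = a + b]) ->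
  M - n <= Mmax n.
Proof.
move=> uA sA HA HS.
pose lv := fun v : 'I_n => nth 0 A v.
pose sm := fun e : {set 'I_n} => \sum_(x in e) lv x.
pose P (l : nat) (e : {set 'I_n}) := (#|e| == 2) && (sm e == K + M - l).
pose g l := odflt set0 [pick e | P l e].
pose L := [seq l <- iota 1 M | l \notin A].
pose E := [set e in map g L].
have lvA : forall v, lv v \in A by move=> v; apply: mem_nth; rewrite sA.
have memL : forall l, l \in L = (l \notin A) && (1 <= l <= M).
  by move=> l; rewrite mem_filter mem_iota; congr (_ && _); lia.
have gP : forall l, l \in L -> P l (g l).
  move=> l; rewrite memL => /andP [nA lb].
  rewrite /g; case: pickP => [e //|none]; exfalso.
  have [a [b [aA bA ab eq]]] := HS (K + M - l) ltac:(lia).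
  have ia : index a A < n by rewrite -sA index_mem.
  have ib : index b A < n by rewrite -sA index_mem.
  have nab : Ordinal ia != Ordinal ib.
    apply/negP => /eqP [] /(congr1 (nth 0 A)); rewrite !nth_index // => eab.
    by rewrite eab eqxx in ab.
  have := none [set Ordinal ia; Ordinal ib].
  rewrite /P cards2 nab /= /sm big_setU1 /=; last by rewrite inE.
  by rewrite big_set1 /lv /= !nth_index // eq eqxx.
have gcard : forall l, l \in L -> #|g l| = 2.
  by move=> l /gP /andP [/eqP].
have gsum : forall l, l \in L -> sm (g l) = K + M - l.
  by move=> l /gP /andP [_ /eqP].
have Lb : forall l, l \in L -> 1 <= l <= M by move=> l; rewrite memL => /andP [].
have ginj : {in L &, injective g}.
  move=> l1 l2 h1 h2 e; have := gsum _ h1; rewrite e gsum //.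
  have := Lb _ h1; have := Lb _ h2; lia.
have hcount : count (fun l => l \in A) (iota 1 M) = n.
  rewrite -size_filter -sA; apply: perm_size; apply: uniq_perm => //.
    by rewrite filter_uniq // iota_uniq.
  move=> x; rewrite mem_filter mem_iota; case xA: (x \in A) => //=.
  have := HA _ xA; lia.
have Lsz : size L = M - n.
  have := count_predC (fun l => l \in A) (iota 1 M).
  have h2 : count (fun l => l \notin A) (iota 1 M) = count (predC (fun l => l \in A)) (iota 1 M) by [].
  rewrite size_iota hcount /L size_filter h2; lia.
have nM : n <= M by rewrite -hcount -[X in _ <= X](size_iota 1) count_size.
have EC : #|E| = M - n.
  rewrite cardsE (card_uniqP _) ?size_map //.
  by rewrite map_inj_in_uniq // filter_uniq // iota_uniq.
have EL : forall e, e \in E -> exists2 l, l \in L & e = g l.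
  by move=> e; rewrite inE => /mapP.
have EM : edge_magic E.
  split.
    apply/forallP => e; apply/implyP => /EL [l lL ->]; by rewrite gcard.
  exists lv, (fun e => K + M - sm e).
  rewrite /edge_magic_labelling EC.
  split.
  - split.
      move=> v; have := HA _ (lvA v); lia.
    move=> e /EL [l lL ->]; rewrite gsum //; have := Lb _ lL; lia.
  - split.
      move=> u v; rewrite /lv => /eqP; rewrite nth_uniq ?sA // => /eqP.
      exact: val_inj.
    move=> e1 e2 /EL [l1 h1 ->] /EL [l2 h2 ->]; rewrite !gsum // => h.
    congr g; have := Lb _ h1; have := Lb _ h2; lia.
  - move=> v e /EL [l lL ->]; rewrite gsum //.
    have := Lb _ lL; move: lL; rewrite memL => /andP [nA _] lb.
    have -> : K + M - (K + M - l) = l by lia.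
    by move=> h; move: (lvA v); rewrite h (negbTE nA).
  - move=> j jb; case jA: (j \in A).
      left.
      have ij : index j A < n by rewrite -sA index_mem.
      by exists (Ordinal ij); rewrite /lv /= nth_index.
    right.
    have jL : j \in L by rewrite memL jA /=; lia.
    exists (g j); first by rewrite inE map_f.
    rewrite gsum //; lia.
  - exists (K + M) => e /EL [l lL ->].
    have := gsum _ lL; rewrite /sm => ->; have := Lb _ lL; lia.
rewrite -EC /Mmax; apply: (leq_bigmax_cond (P := fun E => edge_magicb E)).
by rewrite /edge_magicb; case: ClassicalEpsilon.excluded_middle_informative.
Qed.
Local Open Scope ring_scope.

Theorem lemma1 (n : nat) (s : seq int) (k m : int) :
  sorted <%R s -> size s = n -> head 0 s = 1 ->
  (forall x : int, k <= x <= k + m - 1 -> in_restricted_sumset s x) ->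
  last 0 s <= m ->
  (Mmax n)%:Z >= m - n%:Z.
Proof.
move=> so sz hd HS hl.
case: (leP (m - n%:Z) 0) => [h|mn]; first by apply: le_trans h _.
case: s so sz hd HS hl => [|a s'] //= so sz ha HS hl.
subst a.
have bnd : forall x, x \in 1 :: s' -> 1 <= x <= m.
  move=> x xin; have /andP [h1 h2] := (@path_bounds _ _ so _ xin).
  by rewrite h1 (le_trans h2 hl).
have us : uniq (1 :: s') by apply: lt_sorted_uniq.
have [a [b [aA bA ab kab]]] : in_restricted_sumset (1 :: s') k.
  apply: HS; apply/andP; split; first by [].
  have : (0 <= n%:Z) by []. lia.
have k2 : 2 <= k by have := bnd _ aA; have := bnd _ bA; lia.
have := @construct n (map absz (1 :: s')) `|k|%N `|m|%N.

have absinj : {in 1 :: s' &, injective absz}.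
  move=> x y xi yi; have := bnd _ xi; have := bnd _ yi; lia.
move=> /(_ ltac:(by rewrite map_inj_in_uniq) ltac:(by rewrite size_map)).
have : (n <= `|m|%N)%N by lia.
move=> nm h.
suff : (`|m|%N - n <= Mmax n)%N by lia.
apply: h.
  by move=> x /mapP [y yi ->]; have := bnd _ yi; lia.
move=> x xb.
have [a' [b' [aA' bA' ab' xab]]] : in_restricted_sumset (1 :: s') x%:Z.
  apply: HS; lia.
exists `|a'|%N, `|b'|%N; split; try exact: map_f.
  by apply/negP => /eqP /absinj => /(_ aA' bA') e; rewrite e eqxx in ab'.
have := bnd _ aA'; have := bnd _ bA'; lia.
Qed.
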